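(* Assume $R_1(i)\neq 0$ for $2\le i\le I-1$, $R_2(j)\neq0$ for $2\le j\le J-1$, and that the real parameters $\alpha,\beta$ satisfy $(\alpha+1)R_1(I-1)+(\eta_1-\epsilon_1)\neq0$ and $(\beta-1)R_2(2)+(\eta_2+\epsilon_2)\neq0$. Let $(e_1^m,e_2^m)_{m\ge0}$ be the error iterates of the implicit Schwarz iteration with the Robin-type (optimized) interface condition defined below. Then, with $$\bar\rho=-\frac{(\alpha+1)(\eta_2+\epsilon_2)-R_2(2)}{(\alpha+1)R_1(I-1)+\eta_1-\epsilon_1}\cdot\frac{(\beta-1)(\eta_1-\epsilon_1)-R_1(I-1)}{(\beta-1)R_2(2)+\eta_2+\epsilon_2},$$ one has, for every $m\ge1$, $e_{1,i}^{m+2}=\bar\rho\,e_{1,i}^m$ for all $1\le i\le I$ and $e_{2,j}^{m+2}=\bar\rho\,e_{2,j}^m$ for all $1\le j\le J$.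
   Context: Setting (implicit scheme, constant coefficients). Integers $I,J\ge3$; grid 1 has nodes $1,\dots,I$, grid 2 has nodes $1,\dots,J$, with node $I-1$ of grid 1 coinciding with node 1 of grid 2 and node $I$ of grid 1 coinciding with node 2 of grid 2. Real constants $\eta_k,\epsilon_k,\gamma_k$ ($k=1,2$). Define recursively $R_1(2)=1+2\epsilon_1+\gamma_1$, $R_1(i)=1+2\epsilon_1+\gamma_1+\dfrac{\eta_1^2-\epsilon_1^2}{R_1(i-1)}$ for $i=3,\dots,I-1$; $R_2(J-1)=1+2\epsilon_2+\gamma_2$, $R_2(j)=1+2\epsilon_2+\gamma_2+\dfrac{\eta_2^2-\epsilon_2^2}{R_2(j+1)}$ for $j=J-2,\dots,2$. Error iteration with optimized interface condition (parameters $\alpha,\beta\in\mathbb R$): $e_1^0\in\mathbb R^I$, $e_2^0\in\mathbb R^J$ arbitrary; for $m\ge1$: $e_{1,1}^m=0$; $-(\eta_1+\epsilon_1)e_{1,i-1}^m+(1+2\epsilon_1+\gamma_1)e_{1,i}^m+(\eta_1-\epsilon_1)e_{1,i+1}^m=0$ for $2\le i\le I-1$; $(e_{1,I}^m-e_{1,I-1}^m)+\alpha e_{1,I}^m=(e_{2,2}^{m-1}-e_{2,1}^{m-1})+\alpha e_{2,2}^{m-1}$; $e_{2,J}^m=0$; $-(\eta_2+\epsilon_2)e_{2,j-1}^m+(1+2\epsilon_2+\gamma_2)e_{2,j}^m+(\eta_2-\epsilon_2)e_{2,j+1}^m=0$ for $2\le j\le J-1$; $(e_{2,2}^m-e_{2,1}^m)+\beta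 e_{2,1}^m=(e_{1,I}^{m-1}-e_{1,I-1}^{m-1})+\beta e_{1,I-1}^{m-1}$. *)

(* Defs.v *)
From Stdlib Require Import Reals.
Open Scope R_scope.

Fixpoint Rrec (a b : R) (n : nat) : R :=
  match n with
  | O => a
  | S k => a + b / Rrec a b k
  end.

(* R_1(i), defined for 2 <= i <= I-1:
   R_1(2) = 1+2eps1+gam1, R_1(i) = 1+2eps1+gam1 + (eta1^2-eps1^2)/R_1(i-1). *)
Definition Rk1 (eta1 eps1 gam1 : R) (i : nat) : R :=
  Rrec (1 + 2*eps1 + gam1) (eta1^2 - eps1^2) (i - 2).

(* R_2(j), defined for 2 <= j <= J-1:
   R_2(J-1) = 1+2eps2+gam2, R_2(j) = 1+2eps2+gam2 + (eta2^2-eps2^2)/R_2(j+1). *)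
Definition Rk2 (J : nat) (eta2 eps2 gam2 : R) (j : nat) : R :=
  Rrec (1 + 2*eps2 + gam2) (eta2^2 - eps2^2) (J - 1 - j).

(* e1 m i = e_{1,i}^m (meaningful for 1 <= i <= I), e2 m j = e_{2,j}^m
   (meaningful for 1 <= j <= J). *)
Definition schwarz_iterates (I J : nat) (eta1 eps1 gam1 eta2 eps2 gam2 alpha beta : R)
    (e1 e2 : nat -> nat -> R) : Prop :=
  forall m : nat, (1 <= m)%nat ->
    e1 m 1%nat = 0 /\
    (forall i, (2 <= i <= I - 1)%nat ->
       - (eta1 + eps1) * e1 m (i - 1)%nat + (1 + 2*eps1 + gam1) * e1 m i
       + (eta1 - eps1) * e1 m (i + 1)%nat = 0) /\
    (e1 m I - e1 m (I - 1)%nat) + alpha * e1 m I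
      = (e2 (m - 1)%nat 2%nat - e2 (m - 1)%nat 1%nat) + alpha * e2 (m - 1)%nat 2%nat /\
    e2 m J = 0 /\
    (forall j, (2 <= j <= J - 1)%nat ->
       - (eta2 + eps2) * e2 m (j - 1)%nat + (1 + 2*eps2 + gam2) * e2 m j
       + (eta2 - eps2) * e2 m (j + 1)%nat = 0) /\
    (e2 m 2%nat - e2 m 1%nat) + beta * e2 m 1%nat
      = (e1 (m - 1)%nat I - e1 (m - 1)%nat (I - 1)%nat) + beta * e1 (m - 1)%nat (I - 1)%nat.

(* Main.v *)
Require Import Defs.
From Stdlib Require Import Reals Lra Lia.
Open Scope R_scope.

Lemma Rk1_succ eta eps gam a : (2 <= a)%nat ->
  Rk1 eta eps gam (a+1) = (1 + 2*eps + gam) + (eta^2 - eps^2) / Rk1 eta eps gam a.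
Proof. intro H. unfold Rk1. replace (a+1-2)%nat with (S (a-2)) by lia. reflexivity. Qed.

Lemma Rk2_eq J eta eps gam k : (k <= J-1)%nat ->
  Rk2 J eta eps gam (J-1-k) = Rrec (1 + 2*eps + gam) (eta^2 - eps^2) k.
Proof. intro H. unfold Rk2. replace (J-1-(J-1-k))%nat with k by lia. reflexivity. Qed.

Section S.
Variables (I J : nat) (eta1 eps1 gam1 eta2 eps2 gam2 alpha beta : R)
    (e1 e2 : nat -> nat -> R).
Hypothesis HS : schwarz_iterates I J eta1 eps1 gam1 eta2 eps2 gam2 alpha beta e1 e2.
Hypothesis HR1 : forall i, (2 <= i <= I - 1)%nat -> Rk1 eta1 eps1 gam1 i <> 0.
Hypothesis HR2 : forall j, (2 <= j <= J - 1)%nat -> Rk2 J eta2 eps2 gam2 j <> 0.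

Lemma L1 m : (1 <= m)%nat -> forall k, (2+k <= I-1)%nat ->
  Rk1 eta1 eps1 gam1 (2+k) * e1 m (2+k) + (eta1-eps1) * e1 m (2+k+1) = 0.
Proof.
  intro Hm. destruct (HS m Hm) as [H1 [Hrow _]].
  induction k; intro Hk.
  - specialize (Hrow 2%nat ltac:(lia)).
    replace (2-1)%nat with 1%nat in Hrow by lia. rewrite H1 in Hrow.
    replace (2+0)%nat with 2%nat by lia. unfold Rk1; simpl. simpl in Hrow. lra.
  - specialize (IHk ltac:(lia)).
    specialize (Hrow (2+S k)%nat ltac:(lia)).
    replace (2 + S k)%nat with (2+k+1)%nat in * by lia.
    replace (2+k+1-1)%nat with (2+k)%nat in Hrow by lia.
    rewrite Rk1_succ by lia.
    assert (HR : Rk1 eta1 eps1 gam1 (2+k) <> 0) by (apply HR1; lia).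
    set (Ra := Rk1 eta1 eps1 gam1 (2+k)) in *.
    set (x := e1 m (2+k)%nat) in *.
    set (y := e1 m (2+k+1)%nat) in *.
    set (z := e1 m (2+k+1+1)%nat) in *.
    replace ((1 + 2 * eps1 + gam1 + (eta1 ^ 2 - eps1 ^ 2) / Ra) * y + (eta1 - eps1) * z)
      with ((- (eta1 + eps1) * x + (1 + 2 * eps1 + gam1) * y + (eta1 - eps1) * z)
            + (eta1+eps1)/Ra * (Ra * x + (eta1 - eps1) * y)) by (field; auto).
    rewrite Hrow, IHk. ring.
Qed.

Lemma L2 m : (3 <= J)%nat -> (1 <= m)%nat -> forall k, (k <= J-3)%nat ->
  Rk2 J eta2 eps2 gam2 (J-1-k) * e2 m (J-1-k) - (eta2+eps2) * e2 m (J-1-k-1) = 0.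
Proof.
  intros HJ3 Hm. destruct (HS m Hm) as [_ [_ [_ [HJ [Hrow _]]]]].
  induction k; intro Hk.
  - specialize (Hrow (J-1)%nat ltac:(lia)).
    replace (J-1+1)%nat with J in Hrow by lia. rewrite HJ in Hrow.
    rewrite (Rk2_eq J _ _ _ 0) by lia. simpl. replace (J-1-0)%nat with (J-1)%nat by lia. lra.
  - specialize (IHk ltac:(lia)).
    specialize (Hrow (J-1-S k)%nat ltac:(lia)).
    rewrite (Rk2_eq J _ _ _ k) in IHk by lia. rewrite (Rk2_eq J _ _ _ (S k)) by lia. cbn [Rrec].
    assert (HR : Rrec (1 + 2 * eps2 + gam2) (eta2 ^ 2 - eps2 ^ 2) k <> 0).
    { rewrite <- (Rk2_eq J _ _ _ k) by lia. apply HR2. lia. }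
    replace (J-1-S k+1)%nat with (J-1-k)%nat in Hrow by lia.
    replace (J-1-k-1)%nat with (J-1-S k)%nat in IHk by lia.
    set (Ra := Rrec (1 + 2 * eps2 + gam2) (eta2 ^ 2 - eps2 ^ 2) k) in *.
    set (x := e2 m (J-1-S k-1)%nat) in *.
    set (y := e2 m (J-1-S k)%nat) in *.
    set (z := e2 m (J-1-k)%nat) in *.
    replace ((1 + 2 * eps2 + gam2 + (eta2 ^ 2 - eps2 ^ 2) / Ra) * y - (eta2 + eps2) * x)
      with ((- (eta2 + eps2) * x + (1 + 2 * eps2 + gam2) * y + (eta2 - eps2) * z)
            - (eta2-eps2)/Ra * (Ra * z - (eta2 + eps2) * y)) by (field; auto).
    rewrite Hrow, IHk. ring.
Qed.

Lemma Lin1 m m' t : (3 <= I)%nat -> (1 <= m)%nat -> (1 <= m')%nat ->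
  e1 m' I = t * e1 m I -> forall i, (1 <= i <= I)%nat -> e1 m' i = t * e1 m i.
Proof.
  intros HI Hm Hm' Ht.
  assert (K : forall k, (k <= I-1)%nat -> e1 m' (I-k) = t * e1 m (I-k)).
  { induction k; intro Hk.
    - replace (I-0)%nat with I by lia. exact Ht.
    - specialize (IHk ltac:(lia)).
      destruct (Nat.eq_dec (I - S k) 1) as [E|E].
      + rewrite E. destruct (HS m Hm) as [A _]. destruct (HS m' Hm') as [B _].
        rewrite A, B. ring.
      + pose proof (L1 m Hm (I - S k - 2) ltac:(lia)) as Q.
        pose proof (L1 m' Hm' (I - S k - 2) ltac:(lia)) as Q'.
        replace (2 + (I - S k - 2))%nat with (I - S k)%nat in Q, Q' by lia.
        replace (I - S k + 1)%nat with (I - k)%nat in Q, Q' by lia.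
        assert (HR : Rk1 eta1 eps1 gam1 (I - S k) <> 0) by (apply HR1; lia).
        apply (Rmult_eq_reg_l (Rk1 eta1 eps1 gam1 (I - S k))); auto.
        replace (Rk1 eta1 eps1 gam1 (I - S k) * (t * e1 m (I - S k)))
          with (t * (Rk1 eta1 eps1 gam1 (I - S k) * e1 m (I - S k))) by ring.
        assert (A : Rk1 eta1 eps1 gam1 (I - S k) * e1 m (I - S k) = - (eta1-eps1) * e1 m (I-k)%nat) by lra.
        assert (B : Rk1 eta1 eps1 gam1 (I - S k) * e1 m' (I - S k) = - (eta1-eps1) * e1 m' (I-k)%nat) by lra.
        rewrite A, B, IHk. ring. }
  intros i Hi. replace i with (I - (I - i))%nat by lia. apply K. lia.
Qed.

Lemma Lin2 m m' t : (3 <= J)%nat -> (1 <= m)%nat -> (1 <= m')%nat ->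
  e2 m' 1 = t * e2 m 1 -> forall j, (1 <= j <= J)%nat -> e2 m' j = t * e2 m j.
Proof.
  intros HJ Hm Hm' Ht.
  assert (K : forall k, (k <= J-1)%nat -> e2 m' (1+k) = t * e2 m (1+k)).
  { induction k; intro Hk.
    - exact Ht.
    - specialize (IHk ltac:(lia)).
      destruct (Nat.eq_dec (1 + S k) J) as [E|E].
      + rewrite E. destruct (HS m Hm) as [_ [_ [_ [A _]]]].
        destruct (HS m' Hm') as [_ [_ [_ [B _]]]].
        rewrite A, B. ring.
      + pose proof (L2 m HJ Hm (J - 2 - S k) ltac:(lia)) as Q.
        pose proof (L2 m' HJ Hm' (J - 2 - S k) ltac:(lia)) as Q'.
        replace (J - 1 - (J - 2 - S k))%nat with (1 + S k)%nat in Q, Q' by lia.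
        replace (1 + S k - 1)%nat with (1 + k)%nat in Q, Q' by lia.
        assert (HR : Rk2 J eta2 eps2 gam2 (1 + S k) <> 0) by (apply HR2; lia).
        apply (Rmult_eq_reg_l (Rk2 J eta2 eps2 gam2 (1 + S k))); auto.
        replace (Rk2 J eta2 eps2 gam2 (1 + S k) * (t * e2 m (1 + S k)%nat))
          with (t * (Rk2 J eta2 eps2 gam2 (1 + S k) * e2 m (1 + S k)%nat)) by ring.
        assert (A : Rk2 J eta2 eps2 gam2 (1 + S k) * e2 m (1 + S k)%nat = (eta2+eps2) * e2 m (1+k)%nat) by lra.
        assert (B : Rk2 J eta2 eps2 gam2 (1 + S k) * e2 m' (1 + S k)%nat = (eta2+eps2) * e2 m' (1+k)%nat) by lra.
        rewrite A, B, IHk. ring. }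
  intros j Hj. replace j with (1 + (j - 1))%nat by lia. apply K. lia.
Qed.

End S.

Theorem proposition4p2
    (I J : nat) (eta1 eps1 gam1 eta2 eps2 gam2 alpha beta : R)
    (e1 e2 : nat -> nat -> R) :
  (3 <= I)%nat -> (3 <= J)%nat ->
  (forall i, (2 <= i <= I - 1)%nat -> Rk1 eta1 eps1 gam1 i <> 0) ->
  (forall j, (2 <= j <= J - 1)%nat -> Rk2 J eta2 eps2 gam2 j <> 0) ->
  (alpha + 1) * Rk1 eta1 eps1 gam1 (I - 1) + (eta1 - eps1) <> 0 ->
  (beta - 1) * Rk2 J eta2 eps2 gam2 2 + (eta2 + eps2) <> 0 ->
  schwarz_iterates I J eta1 eps1 gam1 eta2 eps2 gam2 alpha beta e1 e2 ->
  let rho :=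
    - (((alpha + 1) * (eta2 + eps2) - Rk2 J eta2 eps2 gam2 2)
        / ((alpha + 1) * Rk1 eta1 eps1 gam1 (I - 1) + eta1 - eps1))
    * (((beta - 1) * (eta1 - eps1) - Rk1 eta1 eps1 gam1 (I - 1))
        / ((beta - 1) * Rk2 J eta2 eps2 gam2 2 + eta2 + eps2)) in
  forall m : nat, (1 <= m)%nat ->
    (forall i, (1 <= i <= I)%nat -> e1 (m + 2)%nat i = rho * e1 m i) /\
    (forall j, (1 <= j <= J)%nat -> e2 (m + 2)%nat j = rho * e2 m j).
Proof.
  intros HI HJ HR1 HR2 HD1 HD2 HS rho m Hm.
  assert (R1nz : Rk1 eta1 eps1 gam1 (I - 1) <> 0) by (apply HR1; lia).
  assert (R2nz : Rk2 J eta2 eps2 gam2 2 <> 0) by (apply HR2; lia).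
  set (R1 := Rk1 eta1 eps1 gam1 (I - 1)) in *.
  set (R2 := Rk2 J eta2 eps2 gam2 2) in *.
  assert (Q1 : forall n, (1 <= n)%nat -> R1 * e1 n (I-1)%nat + (eta1-eps1) * e1 n I = 0).
  { intros n Hn. pose proof (L1 I J eta1 eps1 gam1 eta2 eps2 gam2 alpha beta e1 e2 HS HR1 n Hn (I-3) ltac:(lia)) as Q.
    replace (2 + (I-3))%nat with (I-1)%nat in Q by lia.
    replace (I-1+1)%nat with I in Q by lia. exact Q. }
  assert (Q2 : forall n, (1 <= n)%nat -> R2 * e2 n 2%nat - (eta2+eps2) * e2 n 1%nat = 0).
  { intros n Hn. pose proof (L2 I J eta1 eps1 gam1 eta2 eps2 gam2 alpha beta e1 e2 HS HR2 n HJ Hn (J-3) ltac:(lia)) as Q.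
    replace (J - 1 - (J-3))%nat with 2%nat in Q by lia.
    replace (2-1)%nat with 1%nat in Q by lia. exact Q. }
  assert (F1 : forall n, (1 <= n)%nat -> e1 n I = R1 *
     ((e2 (n - 1)%nat 2%nat - e2 (n - 1)%nat 1%nat) + alpha * e2 (n - 1)%nat 2%nat)
     / ((alpha + 1) * R1 + (eta1 - eps1))).
  { intros n Hn. destruct (HS n Hn) as [_ [_ [Rb _]]]. rewrite <- Rb.
    pose proof (Q1 n Hn).
    apply (Rmult_eq_reg_r ((alpha + 1) * R1 + (eta1 - eps1))); auto.
    field_simplify; auto. nra. }
  assert (F2 : forall n, (1 <= n)%nat -> e2 n 1%nat = R2 *
     ((e1 (n - 1)%nat I - e1 (n - 1)%nat (I - 1)%nat) + beta * e1 (n - 1)%nat (I - 1)%nat)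
     / ((beta - 1) * R2 + (eta2 + eps2))).
  { intros n Hn. destruct (HS n Hn) as [_ [_ [_ [_ [_ Rb]]]]]. rewrite <- Rb.
    pose proof (Q2 n Hn).
    apply (Rmult_eq_reg_r ((beta - 1) * R2 + (eta2 + eps2))); auto.
    field_simplify; auto. nra. }
  assert (G : forall n, (1 <= n)%nat ->
     (e2 n 2%nat - e2 n 1%nat) + alpha * e2 n 2%nat
     = e2 n 1%nat * ((alpha + 1) * (eta2 + eps2) - R2) / R2).
  { intros n Hn. pose proof (Q2 n Hn) as W.
    assert (W' : alpha * (R2 * e2 n 2%nat - (eta2 + eps2) * e2 n 1%nat) = 0) by (rewrite W; ring).
    apply (Rmult_eq_reg_r R2); auto. field_simplify; auto. lra. }
  assert (H : forall n, (1 <= n)%nat ->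
     (e1 n I - e1 n (I - 1)%nat) + beta * e1 n (I - 1)%nat
     = e1 n I * (R1 - (beta - 1) * (eta1 - eps1)) / R1).
  { intros n Hn. pose proof (Q1 n Hn) as W.
    assert (W' : beta * (R1 * e1 n (I-1)%nat + (eta1 - eps1) * e1 n I) = 0) by (rewrite W; ring).
    apply (Rmult_eq_reg_r R1); auto. field_simplify; auto. lra. }
  assert (D1' : (alpha + 1) * R1 + eta1 - eps1 <> 0) by (intro; apply HD1; lra).
  assert (D2' : (beta - 1) * R2 + eta2 + eps2 <> 0) by (intro; apply HD2; lra).
  split.
  - apply (Lin1 I J eta1 eps1 gam1 eta2 eps2 gam2 alpha beta e1 e2 HS HR1); try lia.
    rewrite (F1 (m+2)%nat) by lia. replace (m+2-1)%nat with (m+1)%nat by lia.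
    rewrite (G (m+1)%nat) by lia. rewrite (F2 (m+1)%nat) by lia.
    replace (m+1-1)%nat with m by lia. rewrite (H m) by lia.
    unfold rho. field. auto.
  - apply (Lin2 I J eta1 eps1 gam1 eta2 eps2 gam2 alpha beta e1 e2 HS HR2); try lia.
    rewrite (F2 (m+2)%nat) by lia. replace (m+2-1)%nat with (m+1)%nat by lia.
    rewrite (H (m+1)%nat) by lia. rewrite (F1 (m+1)%nat) by lia.
    replace (m+1-1)%nat with m by lia. rewrite (G m) by lia.
    unfold rho. field. auto.
Qed.
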